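(* There exist a dynamical system $(X,T)$ which is non-proximal, not totally transitive and transitive compact, and a point $x_0\in X$ such that $\omega_{\mathcal{N}_T}(x_0)\neq\omega_T(x)$ for all $x\in X$.
   Context: A dynamical system $(X,T)$: $X$ is a compact metric space (metric $d$) with more than one point and without isolated points, $T:X\to X$ a continuous surjection. $(X,T)$ is proximal if $\liminf_{n\to\infty}d(T^nx,T^ny)=0$ for all $x,y\in X$. ''Opene'' means open and nonempty. $N_T(U,V)=\{n\in\mathbb{Z}_+:U\cap T^{-n}V\neq\varnothing\}$. $(X,T)$ is transitive if $N_T(U,V)\neq\varnothing$ for all opene $U,V$; totally transitive if $(X,T^k)$ is transitive for every $k\in\mathbb{N}$. $\mathcal{N}_T$ is the family of subsets of $\mathbb{Z}_+$ containing some $N_T(U,V)$ with $U,V$ opene; $\omega_{\mathcal{N}_T}(x)=\bigcap_{F\in\mathcal{N}_T}\overline{\{T^ix:i\in F\}}$; transitive compact means $\omega_{\mathcal{N}_T}(x)\neq\varnothing$ for all $x$. $\omega_T(x)=\bigcap_{n\ge1}\overline{\{T^kx:k\ge n\}}$. *)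

(* Defs.v *)
From HB Require Import structures.
From mathcomp Require Import all_boot all_order all_algebra.
From mathcomp Require Import all_classical all_reals all_analysis.
From mathcomp Require Import Rstruct Rstruct_topology.
From Stdlib Require Import Rdefinitions.

Set Implicit Arguments.
Unset Strict Implicit.
Unset Printing Implicit Defensive.

Import Order.TTheory GRing.Theory Num.Theory.
Local Open Scope classical_set_scope.
Local Open Scope ring_scope.

Section Dyn.
Variable X : metricType R.
Variable T : X -> X.

Definition dynamical_system : Prop :=
  [/\ compact [set: X],
      (exists a b : X, a <> b),
      (forall x : X, ~ open [set x]),
      continuous T &
      (forall y : X, exists x : X, T x = y)].

(* liminf_{n -> oo} d(T^n x, T^n y) = 0, unfolded (d >= 0) *)
Definition proximal : Prop :=
  forall x y : X, forall e : R, 0 < e -> forall N : nat,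
    exists2 n : nat, leq N n & mdist (iter n T x) (iter n T y) < e.

Definition opene (U : set X) : Prop := open U /\ U !=set0.

Definition N_T (U V : set X) : set nat :=
  [set n : nat | U `&` (iter n T @^-1` V) !=set0].

End Dyn.

Definition transitive (X : metricType R) (T : X -> X) : Prop :=
  forall U V : set X, opene U -> opene V -> N_T T U V !=set0.

Definition totally_transitive (X : metricType R) (T : X -> X) : Prop :=
  forall k : nat, leq 1 k -> transitive (iter k T).

Definition family_N (X : metricType R) (T : X -> X) (F : set nat) : Prop :=
  exists U V : set X, [/\ opene U, opene V & N_T T U V `<=` F].

Definition omega_N (X : metricType R) (T : X -> X) (x : X) : set X :=
  \bigcap_(F in family_N T) closure [set iter i T x | i in F].

Definition transitive_compact (X : metricType R) (T : X -> X) : Prop :=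
  forall x : X, omega_N T x !=set0.

Definition omega_T (X : metricType R) (T : X -> X) (x : X) : set X :=
  \bigcap_(n in [set n : nat | leq 1 n])
     closure [set iter k T x | k in [set k : nat | leq n k]].

(* Main.v *)
Require Import Defs.
From HB Require Import structures.
From mathcomp Require Import all_boot all_order all_algebra.
From mathcomp Require Import all_classical all_reals all_analysis.
From mathcomp Require Import Rstruct Rstruct_topology.
From Stdlib Require Import Rdefinitions.
From mathcomp Require Import zify.
Set Implicit Arguments.
Unset Strict Implicit.
Unset Printing Implicit Defensive.
Import Order.TTheory GRing.Theory Num.Theory.
Local Open Scope classical_set_scope.

Implicit Types p q : nat -> bool.
Definition ch (x : nat -> bool) t : bool := x t != x t.+1.
Fixpoint cntp (p : nat -> bool) n m := if m is m'.+1 then p n + cntp p n.+1 m' else 0.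
Definition cnt x := cntp (ch x).
Definition sparse x := forall n m, cnt x n m * cnt x n m <= m.
Definition parity x := forall i j, ch x i -> ch x j -> odd i = odd j.
Definition good x := sparse x /\ parity x.

Lemma cntp_sub p q n m : (forall t, n <= t < n + m -> p t -> q t) ->
  cntp p n m <= cntp q n m.
Proof.
elim: m n => [//|m IH] n H /=.
have H1 : (p n <= q n)%N.
  case: (boolP (p n)) => pn //=. by rewrite (H n) //; lia.
have := IH n.+1 (fun t ht => H t ltac:(lia)). lia.
Qed.

Lemma cntp_or p q (r : nat -> bool) n m : (forall t, p t -> q t || r t) ->
  cntp p n m <= cntp q n m + cntp r n m.
Proof.
move=> H; elim: m n => [//|m IH] n /=.
have := IH n.+1. have := H n.
case: (p n); case: (q n); case: (r n) => //= Hh; try lia.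
Qed.

Lemma cntp_range p Q R n m : (forall t, p t -> Q <= t < R) ->
  cntp p n m <= R - maxn n Q.
Proof.
move=> H; elim: m n => [|m IH] n /=; first by [].
have := IH n.+1. case: (boolP (p n)) => pn /=.
  have := H n pn. lia.
lia.
Qed.

Lemma cntp_range' p Q R n m : (forall t, p t -> Q <= t < R) ->
  cntp p n m <= R - Q.
Proof. move=> H; have := cntp_range n m H; lia. Qed.

Lemma cntp_one p S n m : (forall t, p t -> t = S) -> cntp p n m <= 1.
Proof.
move=> H; apply: (leq_trans (cntp_range (Q := S) (R := S.+1) n m _)); last by lia.
by move=> t /H ->; lia.
Qed.

Lemma cntp_le p n m : cntp p n m <= m.
Proof. elim: m n => [//|m IH] n /=; have := IH n.+1; case: (p n); lia. Qed.

Lemma cntp_add p n a b : cntp p n (a + b) = cntp p n a + cntp p (n + a) b.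
Proof.
elim: a n => [|a IH] n /=; first by rewrite addn0.
by rewrite IH addnS addSn addnA.
Qed.

Lemma cntp_shift (q : nat -> bool) n m : cntp (fun t => q t.+1) n m = cntp q n.+1 m.
Proof. by elim: m n => [//|m IH] n /=; rewrite IH. Qed.

Lemma cntp_mono p n m m' : m <= m' -> cntp p n m <= cntp p n m'.
Proof.
move=> h; rewrite -(subnKC h) cntp_add; lia.
Qed.

Lemma good_mono x y : (forall t, ch y t -> ch x t) -> good x -> good y.
Proof.
move=> H [sx px]; split.
  move=> n m; have h : cnt y n m <= cnt x n m by apply: cntp_sub => t _; apply: H.
  apply: leq_trans (sx n m); exact: leq_mul.
by move=> i j /H hi /H hj; apply: px.
Qed.

Lemma good_ext x y : (forall t, x t = y t) -> good x -> good y.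
Proof. move=> H; apply: good_mono => t; by rewrite /ch !H. Qed.

Lemma good_shift x : good x -> good (fun t => x t.+1).
Proof.
move=> [sx px]; split.
  move=> n m; rewrite /cnt /ch. rewrite (cntp_shift (ch x)). exact: sx.
move=> i j hi hj; have := px _ _ hi hj => /=. by case: (odd i); case: (odd j).
Qed.

Definition pre (x : nat -> bool) := fun t => x t.-1.

Lemma ch_pre x t : ch (pre x) t = if t is t'.+1 then ch x t' else false.
Proof. by case: t => [|t]; rewrite /ch /pre //= eqxx. Qed.

Lemma good_pre x : good x -> good (pre x).
Proof.
move=> [sx px]; split.
  move=> n m; case: n => [|n].
    case: m => [//|m]. rewrite /cnt /= ch_pre /=.
    have -> : cntp (ch (pre x)) 1 m = cnt x 0 m.
      rewrite -(cntp_shift (ch (pre x))) /cnt. elim: m 0 => [//|m IH] k /=.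
      by rewrite IH ch_pre.
    have := sx 0 m; lia.
  have -> : cnt (pre x) n.+1 m = cnt x n m.
    rewrite /cnt -(cntp_shift (ch (pre x))). elim: m n => [//|m IH] k /=.
    by rewrite IH ch_pre.
  exact: sx.
move=> [|i] [|j] //=; rewrite !ch_pre // => hi hj.
by have := px _ _ hi hj => /= ->.
Qed.

Definition shiftR k (x : nat -> bool) := fun t => x (t - k).

Lemma good_shiftR k x : good x -> good (shiftR k x).
Proof.
move=> gx; elim: k => [|k IH].
  by apply: good_ext gx => t; rewrite /shiftR subn0.
apply: good_ext (good_pre IH) => t; rewrite /pre /shiftR; congr x; lia.
Qed.

Lemma ch_shiftR k x t : ch (shiftR k x) t -> k <= t /\ ch x (t - k).
Proof.
rewrite /ch /shiftR; case: (leqP k t) => ht.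
  by have -> : t.+1 - k = (t - k).+1 by lia.
have -> : t - k = 0 by lia. have -> : t.+1 - k = 0 by lia. by rewrite eqxx.
Qed.

Definition trunc (x : nat -> bool) K := fun t => x (minn t K).

Lemma ch_trunc x K t : ch (trunc x K) t -> t < K /\ ch x t.
Proof.
rewrite /ch /trunc => h; case: (ltnP t K) => ht.
  split => //; move: h; have -> : minn t K = t by lia.
  by have -> : minn t.+1 K = t.+1 by lia.
move: h; have -> : minn t K = K by lia. have -> : minn t.+1 K = K by lia.
by rewrite eqxx.
Qed.

Lemma good_trunc x K : good x -> good (trunc x K).
Proof. apply: good_mono => t /ch_trunc []; done. Qed.

Lemma good_closed x : (forall K, exists y, good y /\ forall t, t < K -> x t = y t) ->
  good x.
Proof.
move=> H; split.
  move=> n m; have [y [[sy _] hy]] := H (n + m).+1.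
  have -> : cnt x n m = cnt y n m.
    apply/eqP; rewrite eqn_leq; apply/andP; split; apply: cntp_sub => t ht;
    rewrite /ch !hy //; lia.
  exact: sy.
move=> i j hi hj; have [y [[_ py] hy]] := H (maxn i j).+2.
apply: py; move: hi hj; rewrite /ch !hy //; lia.
Qed.


Definition splice (a b : nat -> bool) S := fun t => if t <= S then a t else b t.

Lemma ch_splice a b S t : ch (splice a b S) t ->
  (t < S /\ ch a t) \/ t = S \/ (S < t /\ ch b t).
Proof.
rewrite /ch /splice => h; case: (ltngtP t S) => h'.
- move: h; have -> : t <= S by lia. have -> : t.+1 <= S by lia. by left.
- move: h; have -> : (t <= S) = false by lia. have -> : (t.+1 <= S) = false by lia.
  by right; right.
- by right; left.
Qed.

Lemma splice_good a b P S Q k : good a -> good b ->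
  (forall t, ch a t -> t < P) -> (forall t, ch b t -> Q <= t < Q + k) ->
  P <= S -> S < Q -> (P + k + 1) * (P + k + 1) <= S - P ->
  (P + k + 1) * (P + k + 1) <= Q - S ->
  (forall t, ch a t -> odd t = odd S) -> (forall t, ch b t -> odd t = odd S) ->
  good (splice a b S).
Proof.
move=> [sa pa] [sb pb] hP hQ PS SQ g1 g2 pa' pb'; split; last first.
  move=> i j /ch_splice hi /ch_splice hj.
  have oi : odd i = odd S by case: hi => [[_ /pa']|[->|[_ /pb']]].
  have oj : odd j = odd S by case: hj => [[_ /pa']|[->|[_ /pb']]].
  by rewrite oi oj.
move=> n m.
case: (leqP (n + m) S) => h1.
  have : cnt (splice a b S) n m <= cnt a n m.
    apply: cntp_sub => t ht /ch_splice [[]//|[|[]]]; lia.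
  move=> h; apply: leq_trans (sa n m); exact: leq_mul.
case: (ltnP S n) => h2.
  have : cnt (splice a b S) n m <= cnt b n m.
    apply: cntp_sub => t ht /ch_splice [[]|[|[]//]]; lia.
  move=> h; apply: leq_trans (sb n m); exact: leq_mul.
case: (boolP ((P <= n) && (n + m <= Q))) => /andP h3.
  case: h3 => h3 h4.
  have : cnt (splice a b S) n m <= cntp (fun t => t == S) n m.
    apply: cntp_sub => t ht /ch_splice [[_ /hP]|[->|[_ /hQ]]]; try lia.
  have := cntp_one n m (p := fun t => t == S) (S := S) (fun t => @eqP _ t S).
  move=> h5 h6; have : cnt (splice a b S) n m <= 1 by lia.
  have hm1 : 1 <= m by lia. nia.
have hm : (P + k + 1) * (P + k + 1) <= m.
  have : P > n \/ n + m > Q by lia.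
  case=> h; lia.
have hc : cnt (splice a b S) n m <= P + 1 + k.
  rewrite /cnt.
  apply: leq_trans (cntp_or (q := fun t => (t < P) || (t == S))
      (r := fun t => (Q <= t < Q + k)) n m _) _.
    move=> t /ch_splice [[_ /hP ->]//|[->|[_ /hQ ->]]]; rewrite ?eqxx ?orbT //.
  apply: leq_add; last by apply: leq_trans (cntp_range' (Q := Q) (R := Q + k) n m _) _; [move=> t ->|lia].
  apply: leq_trans (cntp_or (q := fun t => t < P) (r := fun t => t == S) n m _) _.
    by [].
  apply: leq_add; first by apply: leq_trans (cntp_range' (Q := 0) (R := P) n m _) _; [move=> t ->|lia].
  by apply: (cntp_one (S := S)) => t /eqP.
nia.
Qed.

Lemma mix y y' k : good y -> good y' -> exists B r, forall n, B <= n ->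
  odd n = r -> exists x, good x /\ (forall t, t < k -> x t = y t) /\
  (forall t, t < k -> x (n + t) = y' t).
Proof.
move=> gy gy'.
pose a := trunc y k.
have ga : good a by apply: good_trunc.
pose B0 := (k + k + 1) * (k + k + 1) + k.
have [S [hS1 hS2]] : exists S, B0 <= S <= B0.+1 /\ forall t, ch a t -> odd t = odd S.
  case: (pselect (exists t, ch a t)) => [[t0 ht0]|hn].
    exists (if odd B0 == odd t0 then B0 else B0.+1); split.
      by case: (odd B0 == odd t0); apply/andP; split; lia.
    move=> t ht; have := ga.2 _ _ ht ht0 => ->.
    case: ifP => [/eqP -> //|/negbT]; rewrite /=; by case: (odd t0); case: (odd B0).
  exists B0; split; first by apply/andP; split; lia.
  by move=> t ht; case: hn; exists t.
have [r hr] : exists r, forall j, ch (trunc y' k) j -> odd S (+) odd j = r.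
  case: (pselect (exists j, ch (trunc y' k) j)) => [[j0 hj0]|hn].
    exists (odd S (+) odd j0) => j hj.
    by have := (good_trunc k gy').2 _ _ hj hj0 => ->.
  by exists false => j hj; case: hn; exists j.
exists (S + (k + k + 1) * (k + k + 1) + 1), r => n hn hon.
pose b := shiftR n (trunc y' k).
have gb : good b by apply/good_shiftR/good_trunc.
exists (splice a b S); split.
  apply: (splice_good (P := k) (Q := n) (k := k)) => //.
  - by move=> t /ch_trunc [].
  - move=> t /ch_shiftR [h1 /ch_trunc [h2 _]]; lia.
  - lia.
  - lia.
  - lia.
  - lia.
  - move=> t /ch_shiftR [h1 h2]; have := hr _ h2.
    have -> : odd t = odd n (+) odd (t - n) by rewrite -oddD; congr odd; lia.
    rewrite hon => <-; by case: (odd S); case: (odd (t - n)).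
split.
  move=> t ht; rewrite /splice ifT; last by lia.
  by rewrite /a /trunc; congr y; lia.
move=> t ht; rewrite /splice ifF; last by lia.
by rewrite /b /shiftR /trunc; congr y'; lia.
Qed.

Lemma cnt0_run x a L : cnt x a L = 0 -> forall i, i <= L -> x (a + i) = x a.
Proof.
elim: L a => [|L IH] a h i hi.
  have -> : i = 0 by lia.
  by rewrite addn0.
move: h => /= /eqP; rewrite addn_eq0 => /andP [/eqP h1 /eqP h2].
case: i hi => [|i] hi; first by rewrite addn0.
have := IH a.+1 h2 i ltac:(lia); rewrite addSnnS => ->.
by move: h1; rewrite /ch; case: (x a); case: (x a.+1).
Qed.

Lemma run_aux x L s n : cnt x n (s.+1 * L) <= s -> exists a, n <= a /\ cnt x a L = 0.
Proof.
elim: s n => [|s IH] n h.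
  by exists n; split => //; move: h; rewrite mul1n; lia.
move: h; rewrite mulSn /cnt cntp_add => h.
case: (boolP (cntp (ch x) n L == 0)) => [/eqP h0|hne].
  by exists n.
have [a [h1 h2]] := IH (n + L) ltac:(rewrite /cnt; lia).
exists a; split => //; lia.
Qed.

Lemma run_exists x : good x -> forall L n, exists a, n <= a /\
  forall i, i <= L -> x (a + i) = x a.
Proof.
move=> [sx _] L n.
have h := sx n ((L + L).+1 * L).
have h' : cnt x n ((L + L).+1 * L) <= L + L by nia.
have [a [h1 h2]] := run_aux h'.
by exists a; split => //; apply: cnt0_run.
Qed.

Lemma run_sym x : good x -> exists c, forall L n, exists a, n <= a /\
  forall i, i <= L -> x (a + i) = c.
Proof.
move=> gx.
case: (pselect (forall L n, exists a, n <= a /\ forall i, i <= L -> x (a + i) = false)).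
  by move=> h; exists false.
move=> /existsNP [L0 /existsNP [n0 h0]].
exists true => L n.
have [a [h1 h2]] := run_exists gx (maxn L L0) (maxn n n0).
exists a; split; first lia.
case: (boolP (x a)) => xa.
  by move=> i hi; rewrite h2 //; lia.
case: h0; exists a; split; first lia.
by move=> i hi; rewrite h2 ?(negbTE xa) //; lia.
Qed.


Fixpoint Sq k := if k is k'.+1 then 2 * ((Sq k' + 2) * (Sq k' + 2)) + 1 else 1.
Fixpoint yk k : nat -> bool :=
  if k is k'.+1 then splice (yk k') (fun _ => ~~ yk k' (Sq k')) (Sq k')
  else (fun _ => false).
Definition Pk k := if k is k'.+1 then Sq k' + 1 else 0.

Lemma Sq_gt k : k < Sq k.
Proof. elim: k => [//|k IH] /=; nia. Qed.

Lemma Sq_lt k : Sq k < Sq k.+1.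
Proof. rewrite /=; nia. Qed.

Lemma Sq_mono k m : k <= m -> Sq k <= Sq m.
Proof.
elim: m => [|m IH] h; first by have -> : k = 0 by lia.
case: (ltngtP k m.+1) => h'; try lia.
  have := IH ltac:(lia); have := Sq_lt m; lia.
by rewrite h'.
Qed.

Lemma Sq_odd k : odd (Sq k).
Proof. case: k => [//|k] /=; by rewrite addn1 /= mul2n odd_double. Qed.

Lemma Pk_le k : (Pk k + 1) * (Pk k + 1) <= Sq k - Pk k /\ Pk k <= Sq k.
Proof. case: k => [//|k] /=; split; nia. Qed.

Lemma ch_const (c : bool) t : ch (fun _ => c) t = false.
Proof. by rewrite /ch eqxx. Qed.

Lemma good_const (c : bool) : good (fun _ => c).
Proof.
have h : forall n m, cnt (fun _ => c) n m = 0.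
  move=> n m; rewrite /cnt; elim: m n => [//|m IHm] n /=; by rewrite IHm /ch eqxx.
by split => [n m|i j]; rewrite ?h ?ch_const.
Qed.

Lemma yk_inv k : good (yk k) /\ forall t, ch (yk k) t -> odd t /\ t < Pk k.
Proof.
elim: k => [|k [g IH]].
  split; last by move=> t; rewrite /= ch_const.
  exact: good_const.
have [h1 h2] := Pk_le k.
split.
  apply: (splice_good (P := Pk k) (Q := Sq k + (Pk k + 1) * (Pk k + 1) + 1) (k := 0)) => //.
  - exact: good_const.
  - by move=> t /IH [].
  - by move=> t; rewrite ch_const.
  - lia.
  - lia.
  - lia.
  - by move=> t /IH [-> _]; rewrite Sq_odd.
  - by move=> t; rewrite ch_const.
move=> t /ch_splice [[h3 /IH [h4 _]]|[->|[_]]].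
- by split => //=; lia.
- by split; [apply: Sq_odd|rewrite /=; lia].
- by rewrite ch_const.
Qed.

Lemma yk_stable k m t : k <= m -> t <= Sq k -> yk m t = yk k t.
Proof.
elim: m => [|m IH] h ht; first by have -> : k = 0 by lia.
case: (ltngtP k m.+1) => h'; try lia; last by rewrite h'.
rewrite /= /splice ifT; first by apply: IH => //; lia.
have := Sq_mono (m := m) (k := k) ltac:(lia); lia.
Qed.

Definition x0s t := yk t t.

Lemma x0s_agree K t : t < K -> x0s t = yk K t.
Proof.
move=> h; rewrite /x0s; symmetry; apply: yk_stable; first lia.
have := Sq_gt t; lia.
Qed.

Lemma good_x0s : good x0s.
Proof.
apply: good_closed => K; exists (yk K); split; first by case: (yk_inv K).
exact: x0s_agree.
Qed.

Lemma x0s_ch_odd t : ch x0s t -> odd t.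
Proof.
rewrite /ch (x0s_agree (K := t.+2)) // (x0s_agree (K := t.+2)) //.
by move=> /(yk_inv t.+2).2 [].
Qed.

Lemma yk_Sq k : yk k (Sq k) = odd k.
Proof.
elim: k => [//|k IH] /=; rewrite /splice ifF; last by have := Sq_lt k; lia.
by rewrite IH.
Qed.

Lemma x0s_runs (b : bool) L n : exists a, n <= a /\ forall i, i <= L -> x0s (a + i) = b.
Proof.
pose k := (n + L).*2 + ~~ b.
have hk : ~~ odd k = b by rewrite /k oddD odd_double /=; case: (b).
exists (Sq k).+1; split; first by have := Sq_gt k; lia.
move=> i hi; rewrite /x0s.
have hk1 := Sq_gt k.
rewrite (yk_stable (k := k.+1)); first last.
- rewrite /=; nia.
- lia.
rewrite /= /splice ifF; last by lia.
by rewrite yk_Sq.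
Qed.


Lemma parity_pick x S0 : good x -> exists S, S0 <= S <= S0.+1 /\
  forall t, ch x t -> odd t = odd S.
Proof.
move=> gx.
case: (pselect (exists t, ch x t)) => [[t0 ht0]|hn].
  exists (if odd S0 == odd t0 then S0 else S0.+1); split.
    by case: (odd S0 == odd t0); apply/andP; split; lia.
  move=> t ht; have := gx.2 _ _ ht ht0 => ->.
  case: ifP => [/eqP -> //|/negbT]; rewrite /=; by case: (odd t0); case: (odd S0).
exists S0; split; first by apply/andP; split; lia.
by move=> t ht; case: hn; exists t.
Qed.

Lemma noisol x K : good x -> exists y, good y /\ (forall i, i <= K -> y i = x i) /\
  exists t, y t != x t.
Proof.
move=> gx.
case: (pselect (exists t, K <= t /\ ch x t)) => [[t [h1 h2]]|hn].
  exists (trunc x t); split; first exact: good_trunc.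
  split.
    by move=> i hi; rewrite /trunc; congr x; lia.
  exists t.+1; rewrite /trunc; have -> : minn t.+1 t = t by lia. exact: h2.
have hP : forall t, ch x t -> t < K.
  move=> t ht; case: (ltnP t K) => // h; case: hn; by exists t.
have [S [hS1 hS2]] := parity_pick (K + (K + 1) * (K + 1)) gx.
exists (splice x (fun _ => ~~ x S) S); split.
  apply: (splice_good (P := K) (Q := S + (K + 1) * (K + 1) + 1) (k := 0)) => //.
  - exact: good_const.
  - by move=> t; rewrite ch_const.
  - lia.
  - lia.
  - lia.
  - lia.
  - by move=> t; rewrite ch_const.
split.
  by move=> i hi; rewrite /splice ifT //; lia.
exists S.+1; rewrite /splice ifF; last by lia.
have : ~~ ch x S by apply/negP => /hP; lia.
by rewrite /ch negbK => /eqP <-; case: (x S).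
Qed.

Lemma good_step i : good (fun t => i < t).
Proof.
have hc : forall t, ch (fun t => i < t) t -> t = i.
  move=> t; rewrite /ch => H; case: (ltngtP t i) => h //; move: H.
    have -> : (i < t) = false by lia. by have -> : (i < t.+1) = false by lia.
  have -> : (i < t) = true by lia. by have -> : (i < t.+1) = true by lia.
split.
  move=> n m; rewrite /cnt; have := cntp_one n m hc; have := cntp_le (ch (fun t => i < t)) n m; nia.
by move=> a b /hc -> /hc ->.
Qed.

Lemma ch_step i : ch (fun t => i < t) i.
Proof. rewrite /ch. have -> : (i < i) = false by lia. by rewrite ltnSn. Qed.

Lemma exists_ch (x : nat -> bool) a b : a <= b -> x a != x b ->
  exists t, a <= t < b /\ ch x t.
Proof.
elim: b => [|b IH] hab hx.
  have e : a = 0 by lia.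
  by move: hx; rewrite e eqxx.
case: (ltngtP a b.+1) => h; try lia; last first.
  by move: hx; rewrite h eqxx.
case: (boolP (x a != x b)) => hb.
  have [t [h1 h2]] := IH ltac:(lia) hb; exists t; split => //; lia.
exists b; split; first lia.
move: hb hx; rewrite negbK /ch => /eqP ->; done.
Qed.


Record pt := Pt { sq : nat -> bool ; sqP : good sq }.
HB.instance Definition _ := gen_eqMixin pt.
HB.instance Definition _ := gen_choiceMixin pt.

Lemma pt_eq (x y : pt) : (forall t, sq x t = sq y t) -> x = y.
Proof.
case: x => fx px; case: y => fy py /= h.
have e : fx = fy by apply: funext.
subst fy; by rewrite (Prop_irrelevance px py).
Qed.

Local Open Scope ring_scope.

Definition dist (x y : pt) : R :=
  match pselect (exists n, sq x n != sq y n) with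
  | left h => ((ex_minn h).+1%:R)^-1
  | right _ => 0
  end.

Lemma inv_lt_nat (a b : nat) : ((a.+1%:R : R)^-1 < (b.+1%:R)^-1) = (b < a)%nat.
Proof.
rewrite ltf_pV2 ?posrE ?ltr0Sn //. by rewrite ltr_nat ltnS.
Qed.

Lemma dist_ge0 x y : 0 <= dist x y.
Proof. rewrite /dist; case: pselect => // h; by rewrite invr_ge0 ler0n. Qed.

Lemma dist_lt x y K : (forall i, (i <= K)%nat -> sq x i = sq y i) <-> dist x y < (K.+1%:R)^-1.
Proof.
rewrite /dist; case: pselect => [h|h].
  case: ex_minnP => m hm hmin; rewrite inv_lt_nat; split.
    move=> H; rewrite ltnNge; apply/negP => hmK.
    by move: hm; rewrite H // eqxx.
  move=> hKm i hi; apply/eqP; apply/negP => /negP hne.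
  have := hmin i hne; lia.
split => _; first by rewrite invr_gt0 ltr0Sn.
move=> i _; apply/eqP; apply/negP => /negP hne; apply: h; by exists i.
Qed.

Lemma distxx x : dist x x = 0.
Proof. rewrite /dist; case: pselect => // h; exfalso; case: h => n; by rewrite eqxx. Qed.

Lemma dist_pos x y : dist x y = 0 -> x = y.
Proof.
rewrite /dist; case: pselect => [h|h].
  move/eqP; by rewrite invr_eq0 pnatr_eq0.
move=> _; apply: pt_eq => t; apply/eqP; apply/negP => /negP hne; apply: h; by exists t.
Qed.

Lemma dist_sym x y : dist x y = dist y x.
Proof.
have H : forall a b, dist a b <= dist b a.
  move=> a b; rewrite /dist; case: pselect => [h|h]; last first.
    by case: pselect => // h'; rewrite invr_ge0 ler0n.
  case: pselect => [h'|h']; last first.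
    by case: h'; case: h => n hn; exists n; rewrite eq_sym.
  case: ex_minnP => m hm hmin; case: ex_minnP => m' hm' hmin'.
  have e : m = m'.
    apply/eqP; rewrite eqn_leq; apply/andP; split.
      by apply: hmin; rewrite eq_sym.
    by apply: hmin'; rewrite eq_sym.
  by rewrite e.
by apply/eqP; rewrite eq_le !H.
Qed.

Lemma dist_tri y x z : dist x z <= dist x y + dist y z.
Proof.
rewrite {1}/dist; case: pselect => [h|h]; last first.
  by rewrite addr_ge0 // dist_ge0.
case: ex_minnP => m hm hmin.
case: (leP ((m.+1%:R)^-1) (dist x y)) => hxy.
  by apply: (le_trans hxy); rewrite lerDl dist_ge0.
have /dist_lt hxy' := hxy.
have : ~ (dist y z < (m.+1%:R)^-1).
  move=> /dist_lt hyz; move: hm; by rewrite hxy' // hyz // eqxx.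
move/negP; rewrite -leNgt => hyz.
by apply: (le_trans hyz); rewrite lerDr dist_ge0.
Qed.

HB.instance Definition _ := @isMetric.Build R pt dist distxx dist_pos dist_sym dist_tri.


Definition agree (x y : pt) K := forall i, (i <= K)%nat -> sq y i = sq x i.

Lemma mdistE (x y : pt) : mdist x y = dist x y.
Proof. by []. Qed.

Lemma nbhs_agree (x : pt) K : nbhs x (agree x ^~ K).
Proof.
apply/nbhs_ballP; exists ((K.+1%:R)^-1); first by rewrite /= invr_gt0 ltr0Sn.
move=> y; rewrite ballEmdist /= mdistE => /dist_lt h i hi; by rewrite h.
Qed.

Lemma agree_nbhs (x : pt) (A : set pt) : nbhs x A -> exists K, forall y, agree x y K -> A y.
Proof.
move=> /nbhs_ballP [e /= e0 he].
exists (Num.Def.trunc (e^-1)) => y hy; apply: he.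
rewrite ballEmdist /= mdistE.
have h1 : dist x y < ((Num.Def.trunc e^-1).+1%:R)^-1.
  by apply/dist_lt => i hi; rewrite hy.
apply: (lt_trans h1).
have h2 := truncnS_gt (e^-1).
have h3 : ((Num.Def.trunc e^-1).+1%:R)^-1 < (e^-1)^-1.
  by rewrite ltf_pV2 ?posrE ?invr_gt0 ?ltr0Sn.
by rewrite invrK in h3.
Qed.

Local Close Scope ring_scope.


Definition Tsh (x : pt) : pt := Pt (good_shift (sqP x)).

Lemma iter_sq n (x : pt) t : sq (iter n Tsh x) t = sq x (t + n).
Proof.
elim: n t => [|n IH] t /=; first by rewrite addn0.
by rewrite IH addSnnS.
Qed.

Lemma iter_iter_sq n k (x : pt) t : sq (iter n (iter k Tsh) x) t = sq x (t + n * k).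
Proof.
elim: n t => [|n IH] t /=; first by rewrite mul0n addn0.
by rewrite iter_sq IH mulSn; congr sq; lia.
Qed.

Lemma open_agree (x : pt) (U : set pt) : open U -> U x -> exists K, forall y, agree x y K -> U y.
Proof. by rewrite openE => h /h; apply: agree_nbhs. Qed.

Definition Uc i : set pt := [set y | ch (sq y) i].

Lemma Uc_opene i : open (Uc i) /\ Uc i !=set0.
Proof.
split.
  rewrite openE => x hx; apply: filterS (nbhs_agree x i.+1) => y hy.
  by rewrite /Uc /= /ch !hy.
by exists (Pt (good_step i)); apply: ch_step.
Qed.

Definition cpt (c : bool) : pt := Pt (good_const c).

Lemma compact_pt : compact [set: pt].
Proof.
rewrite compact_ultra => F FU _.
pose zs n := `[< F [set y : pt | sq y n] >].
have hz : forall n, F [set y : pt | sq y n = zs n].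
  move=> n; rewrite /zs; case: asboolP => h.
    by apply: filterS h => y /= ->.
  have [//|h'] := in_ultra_setVsetC [set y : pt | sq y n] FU.
  by apply: filterS h' => y /= /negP /negbTE.
have hK : forall K, F [set y : pt | forall i, (i <= K)%nat -> sq y i = zs i].
  elim=> [|K IH].
    by apply: filterS (hz 0) => y h i hi; have -> : i = 0 by lia.
  apply: filterS (filterI IH (hz K.+1)) => y [h1 h2] i hi.
  case: (ltngtP i K.+1) => h; try lia; last by rewrite h.
  by apply: h1; lia.
have gz : good zs.
  apply: good_closed => K; have [y hy] := filter_ex (hK K).
  exists (sq y); split; first exact: sqP.
  by move=> t ht; rewrite hy //; lia.
exists (Pt gz); split => //.
move=> A /agree_nbhs [K hA]; apply: filterS (hK K) => y hy; apply: hA.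
by move=> i hi; rewrite hy.
Qed.

Local Open Scope ring_scope.

Lemma ds_Tsh : dynamical_system Tsh.
Proof.
split.
- exact: compact_pt.
- exists (cpt false), (cpt true) => h.
  by have := congr1 (fun z => sq z 0) h.
- move=> x /open_agree h; have [K hK] := h x erefl.
  have [y [gy [hy [t ht]]]] := noisol K (sqP x).
  have := hK (Pt gy) (fun i hi => hy i hi) => /= e.
  by move: ht; rewrite -e /= eqxx.
- move=> x A /agree_nbhs [K hK]; apply: filterS (nbhs_agree x K.+1) => y hy.
  by apply: hK => i hi /=; rewrite hy.
- move=> y; exists (Pt (good_pre (sqP y))); by apply: pt_eq.
Qed.

Lemma nprox : ~ proximal Tsh.
Proof.
move=> /(_ (cpt false) (cpt true) 1 ltr01 0%nat) [n _ h]; move: h.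
rewrite mdistE => h.
have : dist (iter n Tsh (cpt false)) (iter n Tsh (cpt true)) < ((0.+1)%:R)^-1.
  by rewrite mulr1n invr1.
move=> /dist_lt /(_ 0%nat (leqnn 0)).
by rewrite !iter_sq.
Qed.

Lemma ntt : ~ totally_transitive Tsh.
Proof.
move=> /(_ 2%nat isT (Uc 0) (Uc 1) (Uc_opene 0) (Uc_opene 1)) [n [w [hw hv]]].
move: hv; rewrite /Uc /= /ch !iter_iter_sq => hv.
have hv' : ch (sq w) (1 + n * 2) by rewrite /ch; have -> : (1 + n * 2).+1 = 2 + n * 2 by lia.
have := (sqP w).2 _ _ hv' hw.
by rewrite oddD oddM andbF.
Qed.

Local Close Scope ring_scope.


Lemma omegaN_const (x : pt) c :
  (forall L n, exists a, (n <= a)%nat /\ forall i, (i <= L)%nat -> sq x (a + i) = c) ->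
  omega_N Tsh x (cpt c).
Proof.
move=> H F [U [V [[oU [u Uu]] [oV [v Vv]] sub]]] B /agree_nbhs [K hB].
have [K1 hU] := open_agree oU Uu.
have [K2 hV] := open_agree oV Vv.
have [B0 [r hmix]] := mix (maxn K1 K2).+1 (sqP u) (sqP v).
have [a [ha hrun]] := H K.+1 B0.
pose n := if odd a == r then a else a.+1.
have hn1 : (B0 <= n)%nat by rewrite /n; case: ifP; lia.
have hn2 : odd n = r.
  rewrite /n; case: ifP => [/eqP //|/negbT]; rewrite /=; by case: (odd a); case: (r).
have hn3 : n = a \/ n = a.+1 by rewrite /n; case: ifP; [left|right].
have [w [gw [hw1 hw2]]] := hmix n hn1 hn2.
exists (iter n Tsh x); split.
  exists n => //; apply: sub; exists (Pt gw); split.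
    by apply: hU => i hi /=; rewrite hw1 //; lia.
  apply: hV => i hi; rewrite iter_sq /= addnC hw2 //; lia.
apply: hB => i hi; rewrite iter_sq /=.
case: hn3 => ->.
  by rewrite addnC hrun //; lia.
by rewrite addnS -addSn addnC hrun //; lia.
Qed.

Lemma tc_Tsh : transitive_compact Tsh.
Proof.
move=> x; have [c hc] := run_sym (sqP x).
by exists (cpt c); apply: omegaN_const.
Qed.

Definition x0pt : pt := Pt good_x0s.

Lemma notin_omegaN (z : pt) i : ch (sq z) i -> ~ omega_N Tsh x0pt z.
Proof.
move=> hz homega.
have hF : family_N Tsh (N_T Tsh (Uc 0) (Uc i)).
  by exists (Uc 0), (Uc i); split => //; apply: Uc_opene.
have [y [[n [w [hw0 hwi]] <-] hag]] := homega _ hF _ (nbhs_agree z i.+1).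
move: hwi; rewrite /Uc /= /ch !iter_sq => hwi.
have hwi' : ch (sq w) (i + n) by rewrite /ch; have -> : (i + n).+1 = i.+1 + n by lia.
have o1 := (sqP w).2 _ _ hwi' hw0.
have hx : ch x0s (i + n).
  move: hz; rewrite /ch -!hag //; rewrite !iter_sq /=.
  by have -> : (i + n).+1 = i.+1 + n by lia.
by move: (x0s_ch_odd hx); rewrite o1.
Qed.

Lemma x0_prop (x : pt) : omega_N Tsh x0pt <> omega_T Tsh x.
Proof.
move=> heq.
have hp : forall c, omega_T Tsh x (cpt c).
  move=> c; rewrite -heq; apply: omegaN_const => L n; exact: x0s_runs.
have hval : forall c n, exists k, (n < k)%nat /\ sq x k = c.
  move=> c n; have := hp c n.+1 (ltac:(rewrite /=; lia)) _ (nbhs_agree (cpt c) 0).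
  move=> [y [[k hk <-] hag]]; exists k; split; first by move: hk; rewrite /=; lia.
  by have := hag 0%nat (leqnn 0); rewrite iter_sq.
have hinf : forall n, exists t, (n <= t)%nat /\ ch (sq x) t.
  move=> n; have [k [hk1 hk2]] := hval false n; have [k' [hk1' hk2']] := hval true n.
  case: (leqP k k') => hkk.
    have [t [ht1 ht2]] := exists_ch (x := sq x) hkk ltac:(by rewrite hk2 hk2').
    exists t; split => //; lia.
  have [t [ht1 ht2]] := exists_ch (x := sq x) (ltnW hkk) ltac:(by rewrite hk2 hk2').
  exists t; split => //; lia.
pose Bs n := [set iter k Tsh x | k in [set k | (n <= k)%nat /\ ch (sq x) k]].
pose G := filter_from setT Bs.
have GF : ProperFilter G.
  apply: filter_from_proper.
    apply: filter_fromT_filter; first by exists 0%nat.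
    move=> i j; exists (maxn i j) => y [k [hk1 hk2] <-]; split.
      by exists k => //; split => //; lia.
    by exists k => //; split => //; lia.
  move=> n _; have [t [ht1 ht2]] := hinf n.
  by exists (iter t Tsh x); exists t.
have [z [_ hz]] := compact_pt GF (filterT).
have hzT : omega_T Tsh x z.
  move=> n hn B hB.
  have [y [[k [hk _] <-] hy]] := hz (Bs n) B (ltac:(by exists n)) hB.
  by exists (iter k Tsh x); split => //; exists k.
have hz0 : ch (sq z) 0.
  have [y [[k [_ hck] <-] hy]] := hz (Bs 0%nat) _ (ltac:(by exists 0%nat)) (nbhs_agree z 1).
  move: hck; rewrite /ch -!(hy _ _) //; by rewrite !iter_sq.
by apply: (notin_omegaN hz0); rewrite heq.
Qed.

Theorem corollary6p5 :
  exists (X : metricType R) (T : X -> X),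
    [/\ dynamical_system T,
        ~ proximal T,
        ~ totally_transitive T,
        transitive_compact T &
        exists x0 : X, forall x : X, omega_N T x0 <> omega_T T x].
Proof.
exists pt, Tsh; split.
- exact: ds_Tsh.
- exact: nprox.
- exact: ntt.
- exact: tc_Tsh.
- exists x0pt; exact: x0_prop.
Qed.
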